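(* Let $g\in\Lambda_*$. There is a constant $C$ such that for every triple $a<x<b$ of real numbers, \[\frac{(g(x)-g(a))^2}{x-a}+\frac{(g(x)-g(b))^2}{b-x}\le\frac{(g(b)-g(a))^2}{b-a}+C(b-a).\] Consequently, for every bounded interval $[a,b]$ there is $C'$ such that for every partition $a=x_0<\dots<x_N=b$, $\sum_{j=1}^N\frac{|g(x_j)-g(x_{j-1})|^2}{x_j-x_{j-1}}\le C'\log(N+1)$.
   Context: The Zygmund class $\Lambda_*$ consists of continuous $g\colon\mathbb{R}\to\mathbb{R}$ for which there is $M>0$ with $|g(x+h)-2g(x)+g(x-h)|\le 2Mh$ for all $x\in\mathbb{R}$, $h>0$. *)

(* Defs.v *)
From Stdlib Require Import Reals.
Open Scope R_scope.

Definition zygmund (g : R -> R) : Prop :=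
  continuity g /\
  exists M : R, M > 0 /\
    forall x h : R, h > 0 -> Rabs (g (x + h) - 2 * g x + g (x - h)) <= 2 * M * h.

(* Main.v *)
Require Import Defs.
From Stdlib Require Import Reals Lra Lia Psatz ZArith.
Open Scope R_scope.

Definition Zyg (f : R -> R) (M : R) :=
  forall x h : R, h > 0 -> Rabs (f (x + h) - 2 * f x + f (x - h)) <= 2 * M * h.

Lemma tri2 (p q r : R) : 2 * Rabs q <= Rabs p + Rabs r + Rabs (p - 2 * q + r).
Proof.
  pose proof (Rabs_triang (p + r) (-(p - 2*q + r))).
  pose proof (Rabs_triang p r).
  replace (p + r + - (p - 2 * q + r)) with (2 * q) in H by ring.
  rewrite Rabs_Ropp, Rabs_mult, (Rabs_right 2) in H by lra. lra.
Qed.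

Lemma helpA (T M L u : R) : 0 <= T -> T <= M * L -> L <= 4 * u -> M > 0 -> L > 0 ->
  T ^ 2 <= 16 * M ^ 2 * u * L.
Proof.
  intros. assert (T ^ 2 <= (M * L) ^ 2) by (apply pow_incr; lra).
  assert (M ^ 2 * L * L <= M ^ 2 * L * (4 * u)).
  { apply Rmult_le_compat_l; [|lra]. apply Rmult_le_pos; [|lra]. apply pow2_ge_0. }
  replace ((M * L) ^ 2) with (M ^ 2 * L * L) in H4 by ring. assert (0 <= M ^ 2 * L * u) by (apply Rmult_le_pos; [apply Rmult_le_pos; [apply pow2_ge_0|lra]|lra]). lra.
Qed.

Lemma base_bound (f : R -> R) (M a b : R) :
  M > 0 -> a < b -> (forall y, continuity_pt f y) -> Zyg f M -> f a = 0 -> f b = 0 ->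
  forall y, a <= y <= b -> Rabs (f y) <= M * (b - a).
Proof.
  intros HM Hab Hc Hz Ha Hb.
  destruct (continuity_ab_maj (fun y => Rabs (f y)) a b) as [y0 [Hmax Hy0]].
  - lra.
  - intros c _. apply (continuity_pt_comp f Rabs). apply Hc. apply Rcontinuity_abs.
  - intros y Hy. apply Rle_trans with (Rabs (f y0)); [apply Hmax; exact Hy|].
    destruct (Rle_dec (y0 - a) (b - y0)) as [Hl|Hl].
    + destruct (Req_dec y0 a) as [E|E].
      * subst. rewrite Ha, Rabs_R0. apply Rmult_le_pos; lra.
      * pose proof (Hz y0 (y0 - a) ltac:(lra)) as H.
        replace (y0 - (y0 - a)) with a in H by ring. rewrite Ha in H.
        assert (Hm := Hmax (y0 + (y0 - a)) ltac:(lra)). simpl in Hm.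
        pose proof (tri2 (f (y0 + (y0-a))) (f y0) 0). rewrite Rabs_R0 in H0. assert (M * (2*(y0-a)) <= M * (b-a)) by (apply Rmult_le_compat_l; lra). lra.
    + destruct (Req_dec y0 b) as [E|E].
      * subst. rewrite Hb, Rabs_R0. apply Rmult_le_pos; lra.
      * pose proof (Hz y0 (b - y0) ltac:(lra)) as H.
        replace (y0 + (b - y0)) with b in H by ring. rewrite Hb in H.
        assert (Hm := Hmax (y0 - (b - y0)) ltac:(lra)). simpl in Hm.
        pose proof (tri2 0 (f y0) (f (y0 - (b-y0)))). rewrite Rabs_R0 in H0. assert (M * (2*(b-y0)) <= M * (b-a)) by (apply Rmult_le_compat_l; lra). lra.
Qed.

Lemma left_step (f : R -> R) (M a b : R) :
  M > 0 -> a < b -> Zyg f M -> f a = 0 ->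
  (forall y, a <= y <= b -> Rabs (f y) <= M * (b - a)) ->
  forall k : nat, forall x, a <= x <= b -> (x - a) * 2 ^ (k + 2) >= b - a ->
    (f x) ^ 2 <= 16 * M ^ 2 * (x - a) * (b - a).
Proof.
  intros HM Hab Hz Ha Hbase k. induction k as [|k IH]; intros x Hx Hk.
  - simpl in Hk. assert (H := Hbase x Hx).
    assert (0 <= Rabs (f x)) by apply Rabs_pos.
    rewrite <- pow2_abs. apply helpA; lra.
  - destruct (Rle_dec (b - a) ((x - a) * 4)) as [H4|H4].
    + assert (H := Hbase x Hx).
      assert (0 <= Rabs (f x)) by apply Rabs_pos.
      rewrite <- pow2_abs. apply helpA; lra.
    + assert (Hm := IH (x + (x - a)) ltac:(lra)).
      assert (Hk' : (x + (x - a) - a) * 2 ^ (k + 2) >= b - a).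
      { replace (S k + 2)%nat with (S (k + 2)) in Hk by lia. simpl in Hk. lra. }
      specialize (Hm Hk').
      destruct (Req_dec x a) as [E|E].
      { subst. rewrite Ha. nra. }
      pose proof (Hz x (x - a) ltac:(lra)) as H.
      replace (x - (x - a)) with a in H by ring. rewrite Ha in H.
      set (t' := f (x + (x - a))) in *.
      set (u := x - a) in *.
      assert (Ht : Rabs (f x) <= Rabs t' / 2 + M * u).
      { pose proof (tri2 t' (f x) 0). rewrite Rabs_R0 in H0. lra. }
      rewrite <- pow2_abs in Hm |- *.
      assert (0 <= Rabs (f x)) by apply Rabs_pos.
      assert (0 <= Rabs t') by apply Rabs_pos.
      replace (x + u - a) with (2 * u) in Hm by (unfold u; ring).
      assert (Hu : u <= b - a) by (unfold u; lra).
      assert (Hu0 : 0 < u) by (unfold u; lra).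
      assert (Rabs (f x) ^ 2 <= (Rabs t' / 2 + M * u) ^ 2).
      { apply pow_incr. lra. }
      assert (Rabs t' * (M * u) <= Rabs t' ^ 2 / 8 + 2 * (M * u) ^ 2).
      { pose proof (pow2_ge_0 (Rabs t' - 4 * (M * u))). lra. }
      assert (0 <= M ^ 2 * u * (b - a - u)).
      { apply Rmult_le_pos; [apply Rmult_le_pos; [apply pow2_ge_0|lra]|lra]. }
      assert (0 <= M ^ 2 * u * (b - a)) by (apply Rmult_le_pos; [apply Rmult_le_pos; [apply pow2_ge_0|lra]|lra]). lra.
Qed.

Lemma exists_pow (r : R) : exists k : nat, r <= 2 ^ k.
Proof.
  destruct (archimed r) as [H1 _].
  destruct (Z.lt_ge_cases (up r) 0) as [Hn|Hp].
  - exists 0%nat. apply IZR_lt in Hn. simpl. lra.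
  - exists (Z.to_nat (up r)).
    assert (forall n : nat, INR n <= 2 ^ n).
    { induction n. simpl; lra. rewrite S_INR. simpl.
      assert (1 <= 2 ^ n) by (apply pow_R1_Rle; lra). lra. }
    specialize (H (Z.to_nat (up r))). rewrite INR_IZR_INZ, Z2Nat.id in H by lia. lra.
Qed.

Lemma left_bound (f : R -> R) (M a b : R) :
  M > 0 -> a < b -> Zyg f M -> f a = 0 ->
  (forall y, a <= y <= b -> Rabs (f y) <= M * (b - a)) ->
  forall x, a <= x <= b -> (f x) ^ 2 <= 16 * M ^ 2 * (x - a) * (b - a).
Proof.
  intros HM Hab Hz Ha Hbase x Hx.
  destruct (Req_dec x a) as [E|E].
  { subst. rewrite Ha. nra. }
  destruct (exists_pow ((b - a) / (x - a))) as [k Hk].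
  apply (left_step f M a b HM Hab Hz Ha Hbase k x Hx).
  rewrite pow_add.
  apply Rmult_le_compat_l with (r := x - a) in Hk; [|lra].
  unfold Rdiv in Hk. rewrite <- Rmult_assoc, (Rmult_comm (x - a)), Rmult_assoc, Rinv_r, Rmult_1_r in Hk by lra.
  assert (1 <= 2 ^ k) by (apply pow_R1_Rle; lra).
  simpl. nra.
Qed.

Lemma part1 (g : R -> R) (M : R) : M > 0 -> continuity g -> Zyg g M ->
  forall a x b, a < x -> x < b ->
  (g x - g a) ^ 2 / (x - a) + (g x - g b) ^ 2 / (b - x)
    <= (g b - g a) ^ 2 / (b - a) + 32 * M ^ 2 * (b - a).
Proof.
  intros HM Hc Hz a x b Hax Hxb.
  set (c := (g b - g a) / (b - a)).
  set (phi := fun y => g y - g a - c * (y - a)).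
  assert (Hpc : forall y, continuity_pt phi y).
  { intro y. unfold phi. reg. }
  assert (Hpz : Zyg phi M).
  { intros y h Hh. unfold phi.
    replace (g (y + h) - g a - c * (y + h - a) - 2 * (g y - g a - c * (y - a)) +
      (g (y - h) - g a - c * (y - h - a))) with (g (y + h) - 2 * g y + g (y - h)) by ring.
    apply Hz; exact Hh. }
  assert (Hpa : phi a = 0) by (unfold phi; ring).
  assert (Hpb : phi b = 0) by (unfold phi, c; field; lra).
  assert (Hab : a < b) by lra.
  assert (Hbase := base_bound phi M a b HM Hab Hpc Hpz Hpa Hpb).
  assert (HL := left_bound phi M a b HM Hab Hpz Hpa Hbase x ltac:(lra)).
  set (psi := fun y => phi (- y)).
  assert (Hsz : Zyg psi M).
  { intros y h Hh. unfold psi.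
    replace (phi (- (y + h)) - 2 * phi (- y) + phi (- (y - h))) with
      (phi (- y + h) - 2 * phi (- y) + phi (- y - h)).
    - apply Hpz; exact Hh.
    - replace (- (y + h)) with (- y - h) by ring. replace (- (y - h)) with (- y + h) by ring. ring. }
  assert (Hsa : psi (- b) = 0) by (unfold psi; rewrite Ropp_involutive; exact Hpb).
  assert (Hsbase : forall y, - b <= y <= - a -> Rabs (psi y) <= M * (- a - - b)).
  { intros y Hy. unfold psi. replace (- a - - b) with (b - a) by ring. apply Hbase. lra. }
  assert (HR := left_bound psi M (- b) (- a) HM ltac:(lra) Hsz Hsa Hsbase (- x) ltac:(lra)).
  unfold psi in HR. rewrite Ropp_involutive in HR.
  assert (Hphi : phi x ^ 2 <= 32 * M ^ 2 * (x - a) * (b - x)).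
  { assert (0 <= M ^ 2) by apply pow2_ge_0.
    destruct (Rle_dec (x - a) (b - x)).
    - assert (M ^ 2 * (x - a) * (b - a) <= M ^ 2 * (x - a) * (2 * (b - x))).
      { apply Rmult_le_compat_l; [apply Rmult_le_pos; lra | lra]. }
      lra.
    - assert (M ^ 2 * (- x - - b) * (- a - - b) <= M ^ 2 * (b - x) * (2 * (x - a))).
      { replace (- x - - b) with (b - x) by ring. replace (- a - - b) with (b - a) by ring.
        apply Rmult_le_compat_l; [apply Rmult_le_pos; lra | lra]. }
      lra. }
  assert (Hid : (g x - g a) ^ 2 / (x - a) + (g x - g b) ^ 2 / (b - x)
     = (g b - g a) ^ 2 / (b - a) + (b - a) * (phi x ^ 2 / ((x - a) * (b - x)))).
  { unfold phi, c. field. repeat split; lra. }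
  rewrite Hid. apply Rplus_le_compat_l.
  replace (32 * M ^ 2 * (b - a)) with ((b - a) * (32 * M ^ 2)) by ring.
  apply Rmult_le_compat_l; [lra|].
  apply Rmult_le_reg_r with ((x - a) * (b - x)). { apply Rmult_lt_0_compat; lra. }
  unfold Rdiv. rewrite Rmult_assoc, Rinv_l, Rmult_1_r by (apply Rmult_integral_contrapositive; split; lra).
  lra.
Qed.

Section Tree.
Variable Q : R -> R -> R.
Variable C : R.
Hypothesis HC : 0 <= C.
Hypothesis P1 : forall a x b, a < x -> x < b -> Q a x + Q x b <= Q a b + C * (b - a).
Variable xs : nat -> R.

Fixpoint ssum (i n : nat) : R :=
  match n with O => 0 | S n => ssum i n + Q (xs (i + n)) (xs (i + n + 1)) end.

Lemma ssum_add i m n : ssum i (m + n) = ssum i m + ssum (i + m) n.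
Proof.
  induction n as [|n IH].
  - rewrite Nat.add_0_r. simpl. ring.
  - rewrite Nat.add_succ_r. simpl. rewrite IH.
    replace (i + (m + n))%nat with (i + m + n)%nat by lia. ring.
Qed.

Lemma mono_lt i n : (forall j, (i <= j < i + n)%nat -> xs j < xs (S j)) ->
  forall p q, (i <= p)%nat -> (p < q)%nat -> (q <= i + n)%nat -> xs p < xs q.
Proof.
  intros H p q Hp Hpq Hq. induction q as [|q IH]; [lia|].
  destruct (Nat.eq_dec p q) as [E|E].
  - subst. apply H. lia.
  - apply Rlt_trans with (xs q). apply IH; lia. apply H; lia.
Qed.

Lemma tree k : forall n i, (1 <= n)%nat -> (n <= 2 ^ k)%nat ->
  (forall j, (i <= j < i + n)%nat -> xs j < xs (S j)) ->
  ssum i n <= Q (xs i) (xs (i + n)) + C * (xs (i + n) - xs i) * INR k.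
Proof.
  induction k as [|k IH]; intros n i H1 H2 Hm.
  - simpl in H2. assert (n = 1%nat) by lia. subst. simpl.
    rewrite Nat.add_0_r. lra.
  - destruct (Nat.eq_dec n 1) as [E|E].
    + subst. assert (Hs : ssum i 1 = Q (xs i) (xs (i+1)%nat)) by (simpl; rewrite Nat.add_0_r; ring).
      rewrite Hs.
      assert (xs i < xs (i + 1)%nat) by (rewrite Nat.add_1_r; apply Hm; lia).
      assert (0 <= C * (xs (i + 1)%nat - xs i) * INR (S k)).
      { apply Rmult_le_pos; [apply Rmult_le_pos; lra| apply pos_INR]. }
      lra.
    + assert (Hd := Nat.div_mod n 2 ltac:(lia)).
      assert (Hmd := Nat.mod_upper_bound n 2 ltac:(lia)).
      set (m := (n / 2)%nat) in *.
      assert (Hpow : (2 ^ S k = 2 * 2 ^ k)%nat) by (simpl; lia).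
      assert (Hn : n = (m + (n - m))%nat) by lia.
      rewrite Hn, ssum_add.
      assert (L := IH m i ltac:(lia) ltac:(lia) ltac:(intros j Hj; apply Hm; lia)).
      assert (R' := IH (n - m)%nat (i + m)%nat ltac:(lia) ltac:(lia) ltac:(intros j Hj; apply Hm; lia)).
      rewrite <- Hn. replace (i + m + (n - m))%nat with (i + n)%nat in R' by lia.
      assert (h1 : xs i < xs (i + m)%nat) by (apply (mono_lt i n Hm); lia).
      assert (h2 : xs (i + m)%nat < xs (i + n)%nat) by (apply (mono_lt i n Hm); lia).
      assert (P := P1 _ _ _ h1 h2).
      rewrite S_INR.
      assert (C * (xs (i + m)%nat - xs i) * INR k + C * (xs (i + n)%nat - xs (i + m)%nat) * INR k
        = C * (xs (i + n)%nat - xs i) * INR k) by ring.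
      lra.
Qed.

End Tree.

Lemma sum_ssum (Q : R -> R -> R) (xs : nat -> R) n :
  sum_f_R0 (fun j => Q (xs j) (xs (S j))) n = ssum Q xs 0 (S n).
Proof.
  induction n as [|n IH].
  - simpl. ring.
  - change (sum_f_R0 (fun j => Q (xs j) (xs (S j))) (S n)) with
      (sum_f_R0 (fun j => Q (xs j) (xs (S j))) n + Q (xs (S n)) (xs (S (S n)))).
    rewrite IH. change (ssum Q xs 0 (S (S n))) with (ssum Q xs 0 (S n) + Q (xs (0 + S n)%nat) (xs (0 + S n + 1)%nat)).
    replace (0 + S n + 1)%nat with (S (S n)) by lia. replace (0 + S n)%nat with (S n) by lia. ring.
Qed.

Lemma ln_le' x y : 0 < x -> x <= y -> ln x <= ln y.
Proof. intros H1 H2. destruct (Req_dec x y). subst; lra. left; apply ln_increasing; lra. Qed.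

Lemma final_ineq (s Q0 CL kR l2 lN : R) : 0 <= CL -> 0 < l2 -> l2 <= lN -> kR * l2 <= 2 * lN ->
  s <= Q0 + CL * kR -> s <= (Rabs Q0 + 2 * CL) / l2 * lN.
Proof.
  intros H1 H2 H3 H4 H5.
  apply Rmult_le_reg_r with l2; [lra|].
  replace ((Rabs Q0 + 2 * CL) / l2 * lN * l2) with ((Rabs Q0 + 2 * CL) * lN) by (field; lra).
  assert (Q0 * l2 <= Rabs Q0 * lN).
  { apply Rle_trans with (Rabs Q0 * l2). apply Rmult_le_compat_r; [lra| apply Rle_abs].
    apply Rmult_le_compat_l; [apply Rabs_pos|lra]. }
  assert (CL * (kR * l2) <= CL * (2 * lN)) by (apply Rmult_le_compat_l; lra).
  assert (s * l2 <= (Q0 + CL * kR) * l2) by (apply Rmult_le_compat_r; lra).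
  lra.
Qed.

Theorem mainTheorem9 (g : R -> R) (hg : zygmund g) :
  (exists C : R, forall a x b : R, a < x -> x < b ->
     (g x - g a) ^ 2 / (x - a) + (g x - g b) ^ 2 / (b - x)
       <= (g b - g a) ^ 2 / (b - a) + C * (b - a))
  /\
  (forall a b : R, exists C' : R, forall (N : nat) (xs : nat -> R),
     (1 <= N)%nat -> xs 0%nat = a -> xs N = b ->
     (forall j : nat, (j < N)%nat -> xs j < xs (S j)) ->
     sum_f_R0 (fun j => (Rabs (g (xs (S j)) - g (xs j))) ^ 2 / (xs (S j) - xs j)) (N - 1)
       <= C' * ln (INR N + 1)).
Proof.
  destruct hg as [Hc [M [HM Hz]]].
  assert (P1 := part1 g M HM Hc Hz).
  set (Q := fun p q => (g q - g p) ^ 2 / (q - p)).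
  assert (HC : 0 <= 32 * M ^ 2) by (assert (0 <= M ^ 2) by apply pow2_ge_0; lra).
  assert (P1' : forall a x b, a < x -> x < b -> Q a x + Q x b <= Q a b + 32 * M ^ 2 * (b - a)).
  { intros a x b H1 H2. unfold Q. replace ((g b - g x) ^ 2) with ((g x - g b) ^ 2) by ring.
    apply P1; assumption. }
  split.
  - exists (32 * M ^ 2). exact P1.
  - intros a b. exists ((Rabs (Q a b) + 2 * (32 * M ^ 2 * (b - a))) / ln 2).
    intros N xs HN H0 HNb Hm.
    rewrite (sum_eq _ (fun j => Q (xs j) (xs (S j)))).
    2:{ intros i _. unfold Q. rewrite pow2_abs. reflexivity. }
    rewrite sum_ssum. replace (S (N - 1)) with N by lia.
    assert (Hm' : forall j, (0 <= j < 0 + N)%nat -> xs j < xs (S j)) by (intros; apply Hm; lia).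
    assert (Hab : a < b).
    { rewrite <- H0, <- HNb. apply (mono_lt xs 0 N Hm'); lia. }
    set (k := S (Nat.log2 N)).
    assert (Hsp := Nat.log2_spec N ltac:(lia)).
    assert (Hk1 : (N <= 2 ^ k)%nat) by (unfold k; lia).
    assert (Hk2 : (2 ^ k <= 2 * N)%nat) by (unfold k; simpl; lia).
    assert (T := tree Q (32 * M ^ 2) HC P1' xs k N 0 HN Hk1 Hm').
    rewrite Nat.add_0_l in T. rewrite H0, HNb in T.
    assert (HN1 : 2 <= INR N + 1).
    { assert (1 <= INR N) by (apply (le_INR 1); lia). lra. }
    assert (Hl2 : 0 < ln 2) by (rewrite <- ln_1; apply ln_increasing; lra).
    assert (Hl2N : ln 2 <= ln (INR N + 1)) by (apply ln_le'; lra).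
    assert (Hkl : INR k * ln 2 <= 2 * ln (INR N + 1)).
    { rewrite <- ln_pow by lra.
      replace (2 * ln (INR N + 1)) with (INR 2 * ln (INR N + 1)) by (simpl; ring).
      rewrite <- ln_pow by lra. apply ln_le'. apply pow_lt; lra.
      assert (INR (2 ^ k) <= INR (2 * N)) by (apply le_INR; exact Hk2).
      rewrite pow_INR, mult_INR in H. replace (INR 2) with 2 in H by (simpl; ring).
      pose proof (pow2_ge_0 (INR N)). lra. }
    apply (final_ineq _ (Q a b) (32 * M ^ 2 * (b - a)) (INR k)); try lra.
    apply Rmult_le_pos; lra.
Qed.
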